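(* Let $g(x)=\sum_{n\ge 1}\frac{2\,(4n+1)!}{(n+1)!\,(3n+2)!}\,x^n$, regarded as a formal power series. For all integers $n\ge 1$, $$\frac{[x^n]\,(g(x))^2}{[x^n]\,g(x)}=\frac{10(n-1)(n^2+14n+12)}{3(3n+5)(3n+4)(n+2)}.$$
   Context: For a formal power series $f(x)$, $[x^n]f(x)$ denotes the coefficient of $x^n$ in $f(x)$. *)

(* Defs.v *)
From HB Require Import structures.
From mathcomp Require Import all_boot all_order all_algebra.
Set Implicit Arguments. Unset Strict Implicit. Unset Printing Implicit Defensive.
Import Order.TTheory GRing.Theory Num.Theory.
Local Open Scope ring_scope.

Definition fps := nat -> rat.

Definition fps_mul (f h : fps) : fps :=
  fun n => \sum_(k < n.+1) f k * h (n - k)%N.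

Definition g : fps :=
  fun n => if n == 0%N then 0
           else (2 * (4 * n + 1)`!)%:R / (((n + 1)`!)%:R * ((3 * n + 2)`!)%:R).

(* Main.v *)
Require Import Defs.
From HB Require Import structures.
From mathcomp Require Import all_boot all_order all_algebra.
From mathcomp Require Import ring lra.
Import Order.TTheory GRing.Theory Num.Theory.
Local Open Scope ring_scope.

Definition w (j n : nat) : rat :=
  (j.+1 * (4 * n + j)`!)%:R / (((n`!)%:R) * (((3 * n + j).+1)`!)%:R).

Definition u (j : nat) : fps :=
  fun n => if j is j'.+1 then w j' n else (n == 0%N)%:R.

Lemma factR_neq0 m : ((m`!)%:R : rat) != 0.
Proof. by rewrite pnatr_eq0 -lt0n fact_gt0. Qed.

Lemma natS_neq0 m : ((m.+1)%:R : rat) != 0.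
Proof. by rewrite pnatr_eq0. Qed.

Lemma u_at0 j : u j 0 = 1.
Proof.
case: j => [|j] //=. rewrite /w !muln0 !add0n fact0 mul1r.
rewrite [(j.+1)`!]factS. by rewrite divff // pnatr_eq0 muln_eq0 negb_or /= -lt0n fact_gt0.
Qed.

Lemma w_recS j n : w j.+1 n.+1 = w j n.+1 + w (j+4) n.
Proof.
rewrite /w.
have -> : (4 * n.+1 + j.+1 = (4 * n + j + 4).+1)%N by ring.
have -> : (4 * n.+1 + j = 4 * n + j + 4)%N by ring.
have -> : (4 * n + (j + 4) = 4 * n + j + 4)%N by ring.
have -> : ((3 * n.+1 + j.+1).+1 = (3 * n + j + 4).+1)%N by ring.
have -> : ((3 * n.+1 + j).+1 = (3 * n + j + 4))%N by ring.
have -> : ((3 * n + (j + 4)).+1 = (3 * n + j + 4).+1)%N by ring.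
rewrite [(4 * n + j + 4).+1`!]factS [(3 * n + j + 4).+1`!]factS [n.+1`!]factS.
have h1 := factR_neq0 (4 * n + j + 4).
have h2 := factR_neq0 (3 * n + j + 4).
have h3 := factR_neq0 n.
rewrite !natrM.
set F := ((4 * n + j + 4)`!)%:R; set D := ((3 * n + j + 4)`!)%:R; set N := (n`!)%:R.
have h4 : ((3 * n + j + 4).+1%:R : rat) != 0 by apply: natS_neq0.
have h5 : ((n.+1)%:R : rat) != 0 by apply: natS_neq0.
field.
by rewrite h2 h3 /= -!(natrM, natrD) !nat1r !natS_neq0.
Qed.

Lemma w_rec0 n : w 0 n.+1 = w 3 n.
Proof.
rewrite /w.
have -> : (4 * n.+1 + 0 = (4 * n + 3).+1)%N by ring.
have -> : ((3 * n.+1 + 0).+1 = (3 * n + 3).+1)%N by ring.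
rewrite [(4 * n + 3).+1`!]factS [n.+1`!]factS.
have h1 := factR_neq0 (4 * n + 3).
have h2 := factR_neq0 (3 * n + 3).
have h3 := factR_neq0 n.
rewrite !natrM.
set F := ((4 * n + 3)`!)%:R; set D := ((3 * n + 3)`!)%:R; set N := (n`!)%:R.
field.
by rewrite h2 h3 /= -!(natrM, natrD) !nat1r !natS_neq0.
Qed.

Lemma u_rec j n : u j.+1 n.+1 = u j n.+1 + u (j + 4) n.
Proof.
case: j => [|j] /=; first by rewrite add0r w_rec0.
by rewrite w_recS.
Qed.

Arguments u j n : simpl never.

Lemma conv_rec (f : fps) b n :
  fps_mul f (u b.+1) n.+1 = fps_mul f (u b) n.+1 + fps_mul f (u (b + 4)) n.
Proof.
rewrite /fps_mul big_ord_recr [in X in _ = X + _]big_ord_recr /= subnn !u_at0.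
rewrite addrAC; congr (_ + _).
rewrite -big_split /=; apply: eq_bigr => i _.
have hi : (i <= n)%N by rewrite -ltnS.
by rewrite subSn // u_rec mulrDr.
Qed.

Lemma conv_u a b n : fps_mul (u a) (u b) n = u (a + b) n.
Proof.
elim: n b => [|n IHn] b.
  by rewrite /fps_mul big_ord1 !u_at0 mulr1.
elim: b => [|b IHb].
  rewrite /fps_mul big_ord_recr /= subnn addn0 mulr1 big1 ?add0r //.
  move=> i _; rewrite subSn ?(ltnSE (ltn_ord i)) //= mulr0 //.
by rewrite conv_rec IHb IHn [in RHS]addnS u_rec addnA.
Qed.

Lemma g_aux m :
  (2 * (4 * m + 1)`!)%:R / (((m + 1)`!)%:R * ((3 * m + 2)`!)%:R) =
  2 * w 1 m - w 2 m :> rat.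
Proof.
rewrite /w.
have -> : ((3 * m + 1).+1 = 3 * m + 2)%N by ring.
have -> : ((3 * m + 2).+1`! = (3 * m + 2).+1 * (3 * m + 2)`!)%N by rewrite factS.
have -> : ((4 * m + 2)`! = (4 * m + 1).+1 * (4 * m + 1)`!)%N by rewrite -factS -addnS.
have -> : ((m + 1)`! = m.+1 * m`!)%N by rewrite addn1 factS.
have h1 := factR_neq0 (4 * m + 1).
have h2 := factR_neq0 (3 * m + 2).
have h3 := factR_neq0 m.
rewrite !natrM.
set F := ((4 * m + 1)`!)%:R; set D := ((3 * m + 2)`!)%:R; set N := (m`!)%:R.
field.
by rewrite h2 h3 /= -!(natrM, natrD) !nat1r !natS_neq0.
Qed.

Lemma g_dec k : g k = 2 * u 2 k - u 3 k - u 0 k.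
Proof.
case: k => [|k]; first by rewrite /g /= !u_at0; ring.
rewrite /g /= g_aux /u /=. by rewrite subr0.
Qed.

Lemma conv_g n (hn : (1 <= n)%N) :
  fps_mul g g n = 4 * u 4 n - 4 * u 5 n + u 6 n - 4 * u 2 n + 2 * u 3 n.
Proof.
have E : forall k, g k * g (n - k)%N =
  4 * (u 2 k * u 2 (n - k)%N) - 2 * (u 2 k * u 3 (n - k)%N) - 2 * (u 2 k * u 0 (n - k)%N)
  - 2 * (u 3 k * u 2 (n - k)%N) + (u 3 k * u 3 (n - k)%N) + (u 3 k * u 0 (n - k)%N)
  - 2 * (u 0 k * u 2 (n - k)%N) + (u 0 k * u 3 (n - k)%N) + (u 0 k * u 0 (n - k)%N).
  by move=> k; rewrite !g_dec; ring.
have C : forall a b, \sum_(k < n.+1) u a k * u b (n - k)%N = u (a + b) n.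
  by move=> a b; apply: conv_u.
have u0n : u 0 n = 0 by rewrite /u; case: (n) hn.
rewrite /fps_mul; under eq_bigr => k _ do rewrite E.
rewrite !big_split /= !sumrN -!mulr_sumr !C /=.
rewrite u0n; ring.
Qed.

Theorem mainTheorem2 (n : nat) (hn : (1 <= n)%N) :
  fps_mul g g n / g n =
  (10 * (n%:R - 1) * (n%:R ^+ 2 + 14 * n%:R + 12)) /
  (3 * (3 * n%:R + 5) * (3 * n%:R + 4) * (n%:R + 2)) :> rat.
Proof.
rewrite conv_g //.
have nz : (n == 0%N) = false by case: (n) hn.
rewrite /g nz /u /= /w.
have -> : (4 * n + 2 = (4 * n + 1).+1)%N by ring.
have -> : (4 * n + 3 = (4 * n + 1).+2)%N by ring.
have -> : (4 * n + 4 = (4 * n + 1).+3)%N by ring.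
have -> : (4 * n + 5 = (4 * n + 1).+4)%N by ring.
have -> : ((3 * n + 1).+1 = 3 * n + 2)%N by ring.
have -> : ((3 * n + 3).+1 = (3 * n + 2).+2)%N by ring.
have -> : ((3 * n + 4).+1 = (3 * n + 2).+3)%N by ring.
have -> : ((3 * n + 5).+1 = (3 * n + 2).+4)%N by ring.
have -> : (n + 1 = n.+1)%N by ring.
have h1 := factR_neq0 (4 * n + 1).
have h2 := factR_neq0 (3 * n + 2).
have h3 := factR_neq0 n.
move: h1 h2 h3.
set F := (4 * n + 1)`!; set D := (3 * n + 2)`!; set N := n`!.
move=> h1 h2 h3.
rewrite !factS -/N.
rewrite -/F -/D !natrM.
move: h1 h2 h3; set F' := (F%:R : rat); set D' := (D%:R : rat); set N' := (N%:R : rat).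
move=> h1 h2 h3.
field.
rewrite -!(natrM, natrD) !nat1r !pnatr_eq0 -!lt0n !fact_gt0 /=.
by rewrite !addn_gt0 !orbT.
Qed.
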